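(* The axiom system $\mathbf{AX}^{up}$ is sound and complete for upper probability structures: for every likelihood formula $f$, $f$ is provable in $\mathbf{AX}^{up}$ if and only if $M\models f$ for every upper probability structure $M$.
   Context: Fix a set $\Phi_0$ of primitive propositions; propositional formulas are built from $\Phi_0$ with $\wedge,\neg$ (plus the constant $\mathit{true}$, with $\mathit{false}=\neg\mathit{true}$). A term is $\theta_1 l(\phi_1)+\cdots+\theta_k l(\phi_k)$ with $k\ge1$, reals $\theta_i$ and propositional formulas $\phi_i$; a basic likelihood formula is $t\ge\alpha$ for a term $t$ and real $\alpha$; likelihood formulas are Boolean combinations (via $\neg,\wedge$) of basic likelihood formulas, with abbreviations $l(\phi)-l(\psi)\ge a$ for $l(\phi)+(-1)l(\psi)\ge a$, $t\le a$ for $-t\ge-a$, $t=a$ for $t\ge a\wedge t\le a$. An upper probability structure is $M=(\Omega,\Sigma,\mathcal{P},\pi)$ with $\Sigma$ an algebra on $\Omega$, $\mathcal{P}$ a set of finitely additive probability measures on $\Sigma$, and $\pi$ assigning to each $s\in\Omega$ a truth assignment to $\Phi_0$, such that $[\![p]\!]_M=\{s:\pi(s)(p)=\mathbf{true}\}\in\Sigma$ for each $p$; $[\![\phi]\!]_M$ is defined for all propositional $\phi$ in the standard way. With $\mathcal{P}^*(X)=\sup\{\mu(X):\mu\in\mathcal{P}\}$: $M\models\theta_1 l(\phi_1)+\cdots+\theta_k l(\phi_k)\ge\alpha$ iff $\sum_i\theta_i\mathcal{P}^*([\![\phi_i]\!]_M)\ge\alpha$; $M\models\neg f$ iff $M\not\models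 f$; $M\models f\wedge g$ iff both. The axiom system $\mathbf{AX}^{up}$ consists of: (Taut) all instances of propositional tautologies obtained by substituting likelihood formulas for propositional variables; (MP) from $f$ and $f\Rightarrow g$ infer $g$; (Ineq) all instances of valid inequality formulas, where an inequality formula is a Boolean combination of linear inequalities $a_1x_1+\cdots+a_nx_n\ge c$ over real variables, valid if true under every real assignment, and an instance replaces each variable $x_i$ (uniformly) by $l(\phi_i)$ for a propositional formula $\phi_i$; (L1) $l(\mathit{false})=0$; (L2) $l(\mathit{true})=1$; (L3) $l(\phi)\ge0$; (L4) $l(\phi_1)+\cdots+l(\phi_m)-n\,l(\phi)\ge k$ whenever $\phi\Rightarrow\bigvee_{J\subseteq\{1,\dots,m\},|J|=k+n}\bigwedge_{j\in J}\phi_j$ and $\bigvee_{J\subseteq\{1,\dots,m\},|J|=k}\bigwedge_{j\in J}\phi_j$ are propositional tautologies (for natural numbers $m,n,k$ and propositional $\phi,\phi_1,\dots,\phi_m$); (L5) $l(\phi)=l(\psi)$ whenever $\phi\Leftrightarrow\psi$ is a propositional tautology. *)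

(* Defs.v *)
From Stdlib Require Import Reals List.
From Coquelicot Require Import Coquelicot.
Import ListNotations.
Open Scope R_scope.

Set Implicit Arguments.

Section Syntax.
Variable Phi0 : Type.

Inductive pform : Type :=
| PVar : Phi0 -> pform
| PTrue : pform
| PNot : pform -> pform
| PAnd : pform -> pform -> pform.

Definition PFalse : pform := PNot PTrue.
Definition POr (a b : pform) : pform := PNot (PAnd (PNot a) (PNot b)).
Definition PImp (a b : pform) : pform := PNot (PAnd a (PNot b)).
Definition PIff (a b : pform) : pform := PAnd (PImp a b) (PImp b a).

Fixpoint peval (v : Phi0 -> bool) (f : pform) : bool :=
  match f with
  | PVar p => v p
  | PTrue => true
  | PNot g => negb (peval v g)
  | PAnd g h => andb (peval v g) (peval v h)
  end.

Definition ptaut (f : pform) : Prop := forall v : Phi0 -> bool, peval v f = true.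

Definition big_or (l : list pform) : pform := fold_right POr PFalse l.
Definition big_and (l : list pform) : pform := fold_right PAnd PTrue l.

(* all sub-lists of l of length r, i.e. the families (phi_j)_{j in J} for
   J a subset of the index set of l with |J| = r *)
Fixpoint choose {A : Type} (r : nat) (l : list A) : list (list A) :=
  match r, l with
  | O, _ => [ [] ]
  | S r', [] => []
  | S r', x :: l' => map (cons x) (choose r' l') ++ choose r l'
  end.

Definition at_least (r : nat) (phis : list pform) : pform :=
  big_or (map big_and (choose r phis)).

(* a term theta_1 l(phi_1) + ... + theta_k l(phi_k), k >= 1:
   a first summand followed by a (possibly empty) list of further summands *)
Definition term : Type := ((R * pform) * list (R * pform))%type.

Definition term_list (t : term) : list (R * pform) := fst t :: snd t.

Inductive lform : Type :=
| LGe : term -> R -> lform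
| LNot : lform -> lform
| LAnd : lform -> lform -> lform.

Definition LImp (f g : lform) : lform := LNot (LAnd f (LNot g)).

Definition term_opp (t : term) : term :=
  ((- fst (fst t), snd (fst t)), map (fun p => (- fst p, snd p)) (snd t)).
Definition LLe (t : term) (a : R) : lform := LGe (term_opp t) (- a).
Definition LEq (t : term) (a : R) : lform := LAnd (LGe t a) (LLe t a).
Definition l1 (phi : pform) : term := ((1, phi), []).
Definition ldiff (phi psi : pform) : term := ((1, phi), [(-1, psi)]).

Inductive sform : Type :=
| SVar : nat -> sform
| SNot : sform -> sform
| SAnd : sform -> sform -> sform.

Fixpoint seval (v : nat -> bool) (s : sform) : bool :=
  match s with
  | SVar n => v n
  | SNot s' => negb (seval v s')
  | SAnd a b => andb (seval v a) (seval v b)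
  end.

Definition staut (s : sform) : Prop := forall v : nat -> bool, seval v s = true.

Fixpoint ssubst (sigma : nat -> lform) (s : sform) : lform :=
  match s with
  | SVar n => sigma n
  | SNot s' => LNot (ssubst sigma s')
  | SAnd a b => LAnd (ssubst sigma a) (ssubst sigma b)
  end.

(* a_1 x_{i_1} + ... + a_n x_{i_n} >= c, n >= 1, variables indexed by nat *)
Inductive iform : Type :=
| IGe : (R * nat) -> list (R * nat) -> R -> iform
| INot : iform -> iform
| IAnd : iform -> iform -> iform.

Definition lin_sum (x : nat -> R) (l : list (R * nat)) : R :=
  fold_right (fun p acc => fst p * x (snd p) + acc) 0 l.

Fixpoint ieval (x : nat -> R) (e : iform) : Prop :=
  match e with
  | IGe h tl c => lin_sum x (h :: tl) >= c
  | INot e' => ~ ieval x e'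
  | IAnd a b => ieval x a /\ ieval x b
  end.

Definition ivalid (e : iform) : Prop := forall x : nat -> R, ieval x e.

Fixpoint iinst (sigma : nat -> pform) (e : iform) : lform :=
  match e with
  | IGe h tl c =>
      LGe ((fst h, sigma (snd h)), map (fun p => (fst p, sigma (snd p))) tl) c
  | INot e' => LNot (iinst sigma e')
  | IAnd a b => LAnd (iinst sigma a) (iinst sigma b)
  end.

Definition L4_term (phis : list pform) (n : nat) (phi : pform) : term :=
  match map (fun q => (1, q)) phis with
  | [] => ((- INR n, phi), [])
  | h :: tl => (h, tl ++ [(- INR n, phi)])
  end.

Inductive provable : lform -> Prop :=
| Ax_Taut : forall (s : sform) (sigma : nat -> lform),
    staut s -> provable (ssubst sigma s)
| Ax_Ineq : forall (e : iform) (sigma : nat -> pform),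
    ivalid e -> provable (iinst sigma e)
| Ax_L1 : provable (LEq (l1 PFalse) 0)
| Ax_L2 : provable (LEq (l1 PTrue) 1)
| Ax_L3 : forall phi : pform, provable (LGe (l1 phi) 0)
| Ax_L4 : forall (m n k : nat) (phi : pform) (phis : list pform),
    length phis = m ->
    ptaut (PImp phi (at_least (k + n) phis)) ->
    ptaut (at_least k phis) ->
    provable (LGe (L4_term phis n phi) (INR k))
| Ax_L5 : forall phi psi : pform,
    ptaut (PIff phi psi) -> provable (LEq (ldiff phi psi) 0)
| Rule_MP : forall f g : lform,
    provable f -> provable (LImp f g) -> provable g.

End Syntax.

Definition is_algebra (Omega : Type) (Sigma : (Omega -> Prop) -> Prop) : Prop :=
  Sigma (fun _ => True) /\
  (forall X, Sigma X -> Sigma (fun s => ~ X s)) /\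
  (forall X Y, Sigma X -> Sigma Y -> Sigma (fun s => X s \/ Y s)).

(* mu is a finitely additive probability measure on Sigma
   (only its values on Sigma matter) *)
Definition is_fa_prob (Omega : Type) (Sigma : (Omega -> Prop) -> Prop)
    (mu : (Omega -> Prop) -> R) : Prop :=
  (forall X, Sigma X -> 0 <= mu X) /\
  mu (fun _ => True) = 1 /\
  (forall X Y, Sigma X -> Sigma Y -> (forall s, X s -> Y s -> False) ->
     mu (fun s => X s \/ Y s) = mu X + mu Y).

Record UPS (Phi0 : Type) : Type := {
  ups_Omega : Type;
  ups_Sigma : (ups_Omega -> Prop) -> Prop;
  ups_Sigma_alg : is_algebra ups_Sigma;
  ups_P : ((ups_Omega -> Prop) -> R) -> Prop;
  ups_P_prob : forall mu, ups_P mu -> is_fa_prob ups_Sigma mu;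
  ups_P_nonempty : exists mu, ups_P mu;
  ups_pi : ups_Omega -> Phi0 -> bool;
  ups_pi_meas : forall p : Phi0, ups_Sigma (fun s => ups_pi s p = true)
}.

Section Semantics.
Variables (Phi0 : Type) (M : UPS Phi0).

Definition ext (phi : pform Phi0) : ups_Omega M -> Prop :=
  fun s => peval (ups_pi M s) phi = true.

Definition upper (X : ups_Omega M -> Prop) : R :=
  real (Lub_Rbar (fun r => exists mu, ups_P M mu /\ r = mu X)).

Definition term_val (t : term Phi0) : R :=
  fold_right (fun p acc => fst p * upper (ext (snd p)) + acc) 0 (term_list t).

Fixpoint sat (f : lform Phi0) : Prop :=
  match f with
  | LGe t a => term_val t >= a
  | LNot g => ~ sat g
  | LAnd g h => sat g /\ sat h
  end.

End Semantics.

(* Main.v *)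
Require Import Defs.
From Stdlib Require Import Reals List Lra Lia Classical ClassicalEpsilon FunctionalExtensionality PropExtensionality.
From Coquelicot Require Import Coquelicot.
Import ListNotations.
Open Scope R_scope.

Fixpoint cnt {Phi0 : Type} (v : Phi0 -> bool) (l : list (pform Phi0)) : nat :=
  match l with [] => O | q :: l' => ((if peval v q then 1 else 0) + cnt v l')%nat end.

Lemma peval_big_or {Phi0 : Type} (v : Phi0 -> bool) (l1 l2 : list (pform Phi0)) :
  peval v (big_or (l1 ++ l2)) = orb (peval v (big_or l1)) (peval v (big_or l2)).
Proof.
  induction l1 as [|a l1 IH]; simpl; [reflexivity|].
  rewrite IH. destruct (peval v a), (peval v (big_or l1)), (peval v (big_or l2)); reflexivity.
Qed.

Lemma peval_cons {Phi0 : Type} (v : Phi0 -> bool) x (C : list (list (pform Phi0))) :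
  peval v (big_or (map (@big_and _) (map (cons x) C))) = andb (peval v x) (peval v (big_or (map (@big_and _) C))).
Proof.
  induction C as [|c C IH]; simpl.
  - destruct (peval v x); reflexivity.
  - rewrite IH. destruct (peval v x), (peval v (big_and c)), (peval v (big_or (map (@big_and _) C))); reflexivity.
Qed.

Lemma at_least_spec {Phi0 : Type} (v : Phi0 -> bool) (l : list (pform Phi0)) (r : nat) :
  peval v (at_least r l) = true <-> (r <= cnt v l)%nat.
Proof.
  unfold at_least. revert r; induction l as [|x l IH]; intros r.
  - destruct r; simpl; split; intros H; try lia; try discriminate; reflexivity.
  - destruct r.
    + simpl. split; intros; [lia| reflexivity].
    + simpl choose. rewrite map_app, peval_big_or, peval_cons.
      simpl cnt. specialize (IH r) as IH1. pose proof (IH (S r)) as IH2.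
      destruct (peval v x); simpl.
      * destruct (peval v (big_or (map (@big_and _) (choose r l)))); simpl.
        -- split; intros _; [|reflexivity].
           assert (r <= cnt v l)%nat by (apply IH1; reflexivity). lia.
        -- split; intros H.
           ++ apply IH2 in H. lia.
           ++ assert (~ (r <= cnt v l)%nat) by (intro H'; apply IH1 in H'; discriminate).
              lia.
      * split; intros H; [apply IH2 in H; lia| apply IH2; lia].
Qed.

Lemma pred_ext {T : Type} (X Y : T -> Prop) : (forall s, X s <-> Y s) -> X = Y.
Proof. intros H. apply functional_extensionality. intros s. apply propositional_extensionality. apply H. Qed.

Lemma alg_inter {T : Type} {Sg : (T -> Prop) -> Prop} : is_algebra Sg ->
  forall X Y, Sg X -> Sg Y -> Sg (fun s => X s /\ Y s).
Proof.
  intros [HT [HC HU]] X Y HX HY.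
  assert (E : (fun s => X s /\ Y s) = (fun s => ~ ((fun s => ~ X s) s \/ (fun s => ~ Y s) s))).
  { apply pred_ext. intros s. tauto. }
  rewrite E. apply HC. apply HU; apply HC; assumption.
Qed.

Lemma alg_compl {T : Type} {Sg : (T -> Prop) -> Prop} : is_algebra Sg ->
  forall X, Sg X -> Sg (fun s => ~ X s).
Proof. intros [HT [HC HU]]; auto. Qed.

Lemma alg_true {T : Type} {Sg : (T -> Prop) -> Prop} : is_algebra Sg -> Sg (fun _ => True).
Proof. intros [HT [HC HU]]; auto. Qed.

Lemma mu_empty {T : Type} {Sg : (T -> Prop) -> Prop} {mu} : is_fa_prob Sg mu ->
  forall X, Sg X -> (forall s, ~ X s) -> mu X = 0.
Proof.
  intros [H0 [H1 H2]] X HX Hn.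
  assert (E : (fun s => X s \/ X s) = X) by (apply pred_ext; tauto).
  pose proof (H2 X X HX HX (fun s a _ => Hn s a)) as H. rewrite E in H. lra.
Qed.

Lemma mu_split {T : Type} {Sg : (T -> Prop) -> Prop} {mu} : is_algebra Sg -> is_fa_prob Sg mu ->
  forall X a, Sg X -> Sg a -> mu X = mu (fun s => X s /\ a s) + mu (fun s => X s /\ ~ a s).
Proof.
  intros Ha [H0 [H1 H2]] X a HX Hs.
  assert (E : X = (fun s => (fun s => X s /\ a s) s \/ (fun s => X s /\ ~ a s) s)).
  { apply pred_ext. intros s. tauto. }
  rewrite E at 1. apply H2; try (apply alg_inter; auto; apply alg_compl; auto).
  simpl. tauto.
Qed.

Lemma mu_le1 {T : Type} {Sg : (T -> Prop) -> Prop} {mu} : is_algebra Sg -> is_fa_prob Sg mu ->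
  forall X, Sg X -> mu X <= 1.
Proof.
  intros Ha Hm X HX. pose proof (mu_split Ha Hm (fun _ => True) X (alg_true Ha) HX) as E.
  destruct Hm as [H0 [H1 H2]]. rewrite H1 in E.
  assert (E1 : (fun s => True /\ X s) = X) by (apply pred_ext; tauto). rewrite E1 in E.
  assert (0 <= mu (fun s => True /\ ~ X s)).
  { apply H0. apply alg_inter; auto. apply alg_true; auto. apply alg_compl; auto. }
  lra.
Qed.

Lemma lub_fin (E : R -> Prop) (c e : R) : E e -> (forall r, E r -> r <= c) ->
  exists l, Lub_Rbar E = Finite l /\ (forall r, E r -> r <= l) /\
            (forall b, (forall r, E r -> r <= b) -> l <= b).
Proof.
  intros He Hc. destruct (Lub_Rbar_correct E) as [Hub Hlub].
  destruct (Lub_Rbar E) as [l| |] eqn:EL.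
  - exists l. split; [reflexivity|]. split.
    + intros r Hr. apply (Hub r Hr).
    + intros b Hb. apply (Hlub (Finite b)). intros r Hr. apply Hb; auto.
  - exfalso. specialize (Hlub (Finite c)). simpl in Hlub. apply Hlub. intros r Hr. apply Hc; auto.
  - exfalso. specialize (Hub e He). simpl in Hub. auto.
Qed.

Lemma ext_Sigma {Phi0 : Type} (M : UPS Phi0) (phi : pform Phi0) : ups_Sigma M (ext M phi).
Proof.
  pose proof (ups_Sigma_alg M) as Ha.
  induction phi as [p| |g IH|g IHg h IHh]; unfold ext; simpl.
  - apply ups_pi_meas.
  - assert (E : (fun s : ups_Omega M => true = true) = (fun _ => True)) by (apply pred_ext; intuition).
    rewrite E. apply alg_true; auto.
  - assert (E : (fun s => negb (peval (ups_pi M s) g) = true) = (fun s => ~ ext M g s)).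
    { apply pred_ext. intros s. unfold ext. destruct (peval (ups_pi M s) g); simpl; intuition discriminate. }
    rewrite E. apply alg_compl; auto.
  - assert (E : (fun s => andb (peval (ups_pi M s) g) (peval (ups_pi M s) h) = true) = (fun s => ext M g s /\ ext M h s)).
    { apply pred_ext. intros s. unfold ext. destruct (peval (ups_pi M s) g), (peval (ups_pi M s) h); simpl; intuition discriminate. }
    rewrite E. apply alg_inter; auto.
Qed.

Lemma upper_props {Phi0 : Type} (M : UPS Phi0) (X : ups_Omega M -> Prop) : ups_Sigma M X ->
  (forall mu, ups_P M mu -> mu X <= upper M X) /\
  (forall b, (forall mu, ups_P M mu -> mu X <= b) -> upper M X <= b).
Proof.
  intros HX. destruct (ups_P_nonempty M) as [mu0 Hmu0].
  destruct (lub_fin (fun r => exists mu, ups_P M mu /\ r = mu X) 1 (mu0 X)) as [l [E [H1 H2]]].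
  - exists mu0; auto.
  - intros r [mu [Hm ->]]. eapply mu_le1; eauto. apply ups_Sigma_alg. apply ups_P_prob; auto.
  - unfold upper. rewrite E. simpl. split.
    + intros mu Hm. apply H1. exists mu; auto.
    + intros b Hb. apply H2. intros r [mu [Hm ->]]. auto.
Qed.

Definition ind {T : Type} (X : T -> Prop) (s : T) : nat :=
  if excluded_middle_informative (X s) then 1%nat else 0%nat.
Fixpoint cntS {T : Type} (L : list (T -> Prop)) (s : T) : nat :=
  match L with [] => O | X :: L' => (ind X s + cntS L' s)%nat end.
Fixpoint sumL {T : Type} (mu : (T -> Prop) -> R) (Z : T -> Prop) (L : list (T -> Prop)) : R :=
  match L with [] => 0 | X :: L' => mu (fun s => X s /\ Z s) + sumL mu Z L' end.

Lemma sumL_split {T : Type} {Sg : (T -> Prop) -> Prop} {mu} : is_algebra Sg -> is_fa_prob Sg mu ->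
  forall L Z a, List.Forall Sg L -> Sg Z -> Sg a ->
  sumL mu Z L = sumL mu (fun s => Z s /\ a s) L + sumL mu (fun s => Z s /\ ~ a s) L.
Proof.
  intros Ha Hm L Z a HL HZ HA. induction HL as [|X L HX HL IH]; simpl; [lra|].
  rewrite IH. rewrite (mu_split Ha Hm (fun s => X s /\ Z s) a) by (try apply alg_inter; auto).
  assert (E1 : (fun s => (X s /\ Z s) /\ a s) = (fun s => X s /\ (Z s /\ a s))) by (apply pred_ext; tauto).
  assert (E2 : (fun s => (X s /\ Z s) /\ ~ a s) = (fun s => X s /\ (Z s /\ ~ a s))) by (apply pred_ext; tauto).
  rewrite E1, E2. lra.
Qed.

Lemma integ {T : Type} {Sg : (T -> Prop) -> Prop} {mu} : is_algebra Sg -> is_fa_prob Sg mu ->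
  forall A B, List.Forall Sg A -> List.Forall Sg B ->
  forall Z c d, Sg Z -> (forall s, Z s -> (cntS B s + d <= cntS A s + c)%nat) ->
  sumL mu Z A + INR c * mu Z >= sumL mu Z B + INR d * mu Z.
Proof.
  intros Ha Hm A B HA HB. pose proof Hm as [H0 [H1 H2]].
  induction HA as [|a A Ha0 HA IH]; intros Z c d HZ Hc.
  - induction HB as [|b B Hb0 HB IHB] in Z, d, HZ, Hc |- *.
    + simpl. destruct (classic (exists s, Z s)) as [[s Hs]|Hn].
      * specialize (Hc s Hs). simpl in Hc. apply le_INR in Hc. pose proof (H0 Z HZ). nra.
      * rewrite (mu_empty Hm Z HZ) by (intros s Hs; apply Hn; eauto). lra.
    + set (Z1 := fun s => Z s /\ b s). set (Z2 := fun s => Z s /\ ~ b s).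
      assert (S1 : Sg Z1) by (apply alg_inter; auto).
      assert (S2 : Sg Z2) by (apply alg_inter; auto; apply alg_compl; auto).
      assert (C1 : forall s, Z1 s -> (cntS B s + S d <= cntS [] s + c)%nat).
      { intros s [Hs Hb]. specialize (Hc s Hs). simpl in Hc |- *. unfold ind in Hc.
        destruct (excluded_middle_informative (b s)); [lia|contradiction]. }
      assert (C2 : forall s, Z2 s -> (cntS B s + d <= cntS [] s + c)%nat).
      { intros s [Hs Hb]. specialize (Hc s Hs). simpl in Hc |- *. unfold ind in Hc.
        destruct (excluded_middle_informative (b s)); [contradiction|lia]. }
      pose proof (IHB Z1 (S d) S1 C1) as R1. pose proof (IHB Z2 d S2 C2) as R2.
      rewrite S_INR in R1. simpl in R1, R2 |- *.
      rewrite (sumL_split Ha Hm B Z b HB HZ Hb0).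
      rewrite (mu_split Ha Hm Z b HZ Hb0).
      assert (E : (fun s => b s /\ Z s) = Z1) by (apply pred_ext; unfold Z1; tauto).
      rewrite E. fold Z1 Z2. lra.
  - intros. set (Z1 := fun s => Z s /\ a s). set (Z2 := fun s => Z s /\ ~ a s).
    assert (S1 : Sg Z1) by (apply alg_inter; auto).
    assert (S2 : Sg Z2) by (apply alg_inter; auto; apply alg_compl; auto).
    assert (C1 : forall s, Z1 s -> (cntS B s + d <= cntS A s + S c)%nat).
    { intros s [Hs Hb]. specialize (Hc s Hs). simpl in Hc |- *. unfold ind in Hc.
      destruct (excluded_middle_informative (a s)); [lia|contradiction]. }
    assert (C2 : forall s, Z2 s -> (cntS B s + d <= cntS A s + c)%nat).
    { intros s [Hs Hb]. specialize (Hc s Hs). simpl in Hc |- *. unfold ind in Hc.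
      destruct (excluded_middle_informative (a s)); [contradiction|lia]. }
    pose proof (IH Z1 (S c) d S1 C1) as R1. pose proof (IH Z2 c d S2 C2) as R2.
    simpl.
    rewrite (sumL_split Ha Hm A Z a HA HZ Ha0).
    rewrite (sumL_split Ha Hm B Z a HB HZ Ha0).
    rewrite (mu_split Ha Hm Z a HZ Ha0).
    assert (E : (fun s => a s /\ Z s) = Z1) by (apply pred_ext; unfold Z1; tauto).
    rewrite E. fold Z1 Z2. rewrite S_INR in R1. lra.
Qed.

Definition bdec (P : Prop) : bool := if excluded_middle_informative P then true else false.

Lemma bdec_true (P : Prop) : bdec P = true <-> P.
Proof. unfold bdec. destruct (excluded_middle_informative P); intuition discriminate. Qed.

Lemma sat_ssubst {Phi0 : Type} (M : UPS Phi0) sigma s :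
  sat M (ssubst sigma s) <-> seval (fun n => bdec (sat M (sigma n))) s = true.
Proof.
  induction s as [n|s IH|a IHa b IHb]; simpl.
  - rewrite bdec_true. tauto.
  - rewrite IH. destruct (seval _ s); simpl; intuition discriminate.
  - rewrite IHa, IHb. destruct (seval _ a), (seval _ b); simpl; intuition discriminate.
Qed.

Definition U {Phi0 : Type} (M : UPS Phi0) (phi : pform Phi0) : R := upper M (ext M phi).

Definition tv {Phi0 : Type} (M : UPS Phi0) (l : list (R * pform Phi0)) : R :=
  fold_right (fun p acc => fst p * U M (snd p) + acc) 0 l.

Lemma tv_app {Phi0 : Type} (M : UPS Phi0) l1 l2 : tv M (l1 ++ l2) = tv M l1 + tv M l2.
Proof. induction l1 as [|p l1 IH]; unfold tv in *; simpl; [lra|]. rewrite IH. lra. Qed.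

Lemma term_val_tv {Phi0 : Type} (M : UPS Phi0) t : term_val M t = tv M (term_list t).
Proof. reflexivity. Qed.

Lemma tv_iinst {Phi0 : Type} (M : UPS Phi0) (sigma : nat -> pform Phi0) tl :
  tv M (map (fun p => (fst p, sigma (snd p))) tl) = lin_sum (fun n => U M (sigma n)) tl.
Proof. induction tl as [|p tl IH]; unfold tv in *; simpl; [lra|]. rewrite IH. reflexivity. Qed.

Lemma tv_cons {Phi0 : Type} (M : UPS Phi0) a phi l : term_val M ((a, phi), l) = a * U M phi + tv M l.
Proof. reflexivity. Qed.

Lemma sat_iinst {Phi0 : Type} (M : UPS Phi0) sigma e :
  sat M (iinst sigma e) <-> ieval (fun n => U M (sigma n)) e.
Proof.
  induction e as [h tl c|e IH|a IHa b IHb]; cbn [iinst sat ieval].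
  - rewrite tv_cons, tv_iinst. simpl. tauto.
  - rewrite IH; tauto.
  - rewrite IHa, IHb; tauto.
Qed.

Definition sumU {Phi0 : Type} (M : UPS Phi0) (l : list (pform Phi0)) : R :=
  fold_right (fun q acc => U M q + acc) 0 l.

Lemma tv_ones {Phi0 : Type} (M : UPS Phi0) l : tv M (map (fun q => (1, q)) l) = sumU M l.
Proof. induction l as [|q l IH]; unfold tv, sumU in *; simpl; [lra|]. rewrite IH. lra. Qed.

Lemma term_val_L4 {Phi0 : Type} (M : UPS Phi0) phis n phi :
  term_val M (L4_term phis n phi) = sumU M phis - INR n * U M phi.
Proof.
  rewrite term_val_tv. unfold L4_term. rewrite <- tv_ones.
  destruct (map (fun q => (1, q)) phis) as [|h tl]; unfold term_list; simpl.
  - unfold tv; simpl. lra.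
  - change (tv M (h :: tl ++ [(- INR n, phi)]) = tv M (h :: tl) - INR n * U M phi).
    rewrite app_comm_cons, tv_app. unfold tv; simpl. lra.
Qed.

Lemma cntS_app {T : Type} (l1 l2 : list (T -> Prop)) s : cntS (l1 ++ l2) s = (cntS l1 s + cntS l2 s)%nat.
Proof. induction l1; simpl; lia. Qed.
Lemma cntS_repeat {T : Type} (X : T -> Prop) k s : cntS (repeat X k) s = (k * ind X s)%nat.
Proof. induction k; simpl; lia. Qed.
Lemma sumL_app {T : Type} mu (Z : T -> Prop) l1 l2 : sumL mu Z (l1 ++ l2) = sumL mu Z l1 + sumL mu Z l2.
Proof. induction l1; simpl; lra. Qed.
Lemma sumL_repeat {T : Type} mu (Z : T -> Prop) X k : sumL mu Z (repeat X k) = INR k * mu (fun s => X s /\ Z s).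
Proof. induction k; simpl; [lra|]. rewrite IHk. destruct k; simpl; lra. Qed.

Lemma cntS_map {Phi0 : Type} (M : UPS Phi0) phis s : cntS (map (ext M) phis) s = cnt (ups_pi M s) phis.
Proof.
  induction phis as [|q l IH]; simpl; [reflexivity|]. rewrite IH. unfold ind, ext.
  destruct (excluded_middle_informative (peval (ups_pi M s) q = true)) as [e|e];
  destruct (peval (ups_pi M s) q); try reflexivity; try discriminate; exfalso; auto.
Qed.

Lemma sumL_map {Phi0 : Type} (M : UPS Phi0) mu phis :
  sumL mu (fun _ => True) (map (ext M) phis) = fold_right (fun q acc => mu (ext M q) + acc) 0 phis.
Proof.
  induction phis as [|q l IH]; simpl; [reflexivity|]. rewrite IH.
  assert (E : (fun s => ext M q s /\ True) = ext M q) by (apply pred_ext; tauto). rewrite E. reflexivity.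
Qed.

Lemma sumU_ge {Phi0 : Type} (M : UPS Phi0) mu phis : ups_P M mu ->
  fold_right (fun q acc => mu (ext M q) + acc) 0 phis <= sumU M phis.
Proof.
  intros Hm. induction phis as [|q l IH]; unfold sumU, U in *; simpl; [lra|].
  pose proof (proj1 (upper_props M (ext M q) (ext_Sigma M q)) mu Hm). lra.
Qed.

Lemma L4_mu {Phi0 : Type} (M : UPS Phi0) mu (n k : nat) phi phis : ups_P M mu ->
  ptaut (PImp phi (at_least (k + n) phis)) -> ptaut (at_least k phis) ->
  fold_right (fun q acc => mu (ext M q) + acc) 0 phis >= INR k + INR n * mu (ext M phi).
Proof.
  intros HP H1 H2. pose proof (ups_Sigma_alg M) as Ha. pose proof (ups_P_prob M mu HP) as Hm.
  pose proof Hm as [_ [Hm1 _]].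
  assert (FA : List.Forall (ups_Sigma M) (map (ext M) phis)).
  { apply Forall_forall. intros X HX. apply in_map_iff in HX. destruct HX as [q [<- _]]. apply ext_Sigma. }
  assert (FB : List.Forall (ups_Sigma M) (repeat (fun _ => True) k ++ repeat (ext M phi) n)).
  { apply Forall_forall. intros X HX. apply in_app_or in HX. destruct HX as [HX|HX];
    apply repeat_spec in HX; subst X; [apply alg_true; auto| apply ext_Sigma]. }
  pose proof (integ Ha Hm _ _ FA FB (fun _ => True) 0 0 (alg_true Ha)) as HI.
  rewrite sumL_app, !sumL_repeat, sumL_map in HI.
  assert (E1 : (fun s : ups_Omega M => True /\ True) = (fun _ => True)) by (apply pred_ext; tauto).
  assert (E2 : (fun s => ext M phi s /\ True) = ext M phi) by (apply pred_ext; tauto).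
  rewrite E1, E2, Hm1 in HI. simpl in HI.
  match type of HI with ?A -> _ => assert (HC : A) end.
  2: { specialize (HI HC). lra. }
  intros s _. rewrite cntS_app, !cntS_repeat, cntS_map.
  specialize (H2 (ups_pi M s)). apply at_least_spec in H2.
  unfold ind. destruct (excluded_middle_informative (ext M phi s)) as [e|e].
  - specialize (H1 (ups_pi M s)). unfold ext in e. simpl in H1. rewrite e in H1. simpl in H1.
    destruct (peval (ups_pi M s) (at_least (k + n) phis)) eqn:Ea; [|discriminate].
    apply at_least_spec in Ea. destruct (excluded_middle_informative True); lia.
  - destruct (excluded_middle_informative True); lia.
Qed.

Lemma U_false {Phi0 : Type} (M : UPS Phi0) : U M (PFalse Phi0) = 0.
Proof.
  destruct (upper_props M _ (ext_Sigma M (PFalse Phi0))) as [H1 H2].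
  destruct (ups_P_nonempty M) as [mu0 Hm0].
  assert (Z : forall mu, ups_P M mu -> mu (ext M (PFalse Phi0)) = 0).
  { intros mu Hm. apply (mu_empty (ups_P_prob M mu Hm)). apply ext_Sigma.
    intros s. unfold ext. simpl. discriminate. }
  unfold U. apply Rle_antisym.
  - apply H2. intros mu Hm. rewrite Z; auto. lra.
  - rewrite <- (Z mu0 Hm0). auto.
Qed.

Lemma U_true {Phi0 : Type} (M : UPS Phi0) : U M (PTrue Phi0) = 1.
Proof.
  destruct (upper_props M _ (ext_Sigma M (PTrue Phi0))) as [H1 H2].
  destruct (ups_P_nonempty M) as [mu0 Hm0].
  assert (Z : forall mu, ups_P M mu -> mu (ext M (PTrue Phi0)) = 1).
  { intros mu Hm. destruct (ups_P_prob M mu Hm) as [_ [E _]].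
    assert (E2 : ext M (PTrue Phi0) = (fun _ => True)) by (apply pred_ext; unfold ext; simpl; tauto).
    rewrite E2; auto. }
  unfold U. apply Rle_antisym.
  - apply H2. intros mu Hm. rewrite Z; auto. lra.
  - rewrite <- (Z mu0 Hm0). auto.
Qed.

Lemma U_ge0 {Phi0 : Type} (M : UPS Phi0) phi : 0 <= U M phi.
Proof.
  destruct (upper_props M _ (ext_Sigma M phi)) as [H1 H2].
  destruct (ups_P_nonempty M) as [mu0 Hm0].
  destruct (ups_P_prob M mu0 Hm0) as [P0 _]. unfold U.
  eapply Rle_trans; [apply P0, ext_Sigma| apply H1; auto].
Qed.

Lemma soundness {Phi0 : Type} (f : lform Phi0) : provable f -> forall M, sat M f.
Proof.
  intros Hp M. induction Hp as [s sigma Hs|e sigma He| | |phi|m n k phi phis Hl H1 H2|phi psi H|f g Hf IHf Hg IHg].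
  - apply sat_ssubst. apply Hs.
  - apply sat_iinst. apply He.
  - unfold LEq, LLe, l1, term_opp; cbn [sat fst snd map]. rewrite !tv_cons. unfold tv. simpl.
    rewrite U_false. lra.
  - unfold LEq, LLe, l1, term_opp; cbn [sat fst snd map]. rewrite !tv_cons. unfold tv. simpl.
    rewrite U_true. lra.
  - unfold LEq, LLe, l1, term_opp; cbn [sat fst snd map]. rewrite !tv_cons. unfold tv. simpl.
    pose proof (U_ge0 M phi). lra.
  - cbn [sat]. rewrite term_val_L4.
    assert (K : forall mu, ups_P M mu -> sumU M phis >= INR k + INR n * mu (ext M phi)).
    { intros mu Hm. pose proof (L4_mu M mu n k phi phis Hm H1 H2). pose proof (sumU_ge M mu phis Hm). lra. }
    destruct n as [|n'].
    + destruct (ups_P_nonempty M) as [mu0 Hm0]. specialize (K mu0 Hm0). simpl in *. lra.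
    + assert (Hn : 0 < INR (S n')) by (apply lt_0_INR; lia).
      destruct (upper_props M _ (ext_Sigma M phi)) as [_ HU].
      assert (U M phi <= (sumU M phis - INR k) / INR (S n')).
      { apply HU. intros mu Hm. specialize (K mu Hm). apply Rmult_le_reg_r with (INR (S n')); auto.
        unfold Rdiv. rewrite Rmult_assoc, Rinv_l by lra. lra. }
      apply Rmult_le_compat_r with (r := INR (S n')) in H; [|lra].
      unfold Rdiv in H. rewrite Rmult_assoc, Rinv_l in H by lra. lra.
  - assert (E : ext M phi = ext M psi).
    { apply pred_ext. intros s. specialize (H (ups_pi M s)). unfold ext. simpl in H.
      destruct (peval (ups_pi M s) phi), (peval (ups_pi M s) psi); simpl in H; intuition discriminate. }
    unfold LEq, LLe, ldiff, term_opp; cbn [sat fst snd map]. rewrite !tv_cons. unfold tv. simpl.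
    unfold U. rewrite E. lra.
  - cbn [sat LImp] in IHg. tauto.
Qed.

From Stdlib Require Import ZArith FinFun.
Open Scope R_scope.

Lemma between (Ls Us : list R) : (forall l u, In l Ls -> In u Us -> l <= u) ->
  exists d, (forall l, In l Ls -> l <= d) /\ (forall u, In u Us -> d <= u).
Proof.
  induction Ls as [|l0 Ls IH]; intros H.
  - assert (exists d, forall u, In u Us -> d <= u) as [d Hd].
    { clear H. induction Us as [|u0 Us IHU]; [exists 0; intros u []|].
      destruct IHU as [d Hd]. exists (Rmin d u0). intros u [<-|Hu].
      - apply Rmin_r. - eapply Rle_trans; [apply Rmin_l| auto]. }
    exists d; split; [intros l []|auto].
  - destruct IH as [d [H1 H2]]. { intros l u Hl Hu. apply H; simpl; auto. }
    exists (Rmax l0 d). split.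
    + intros l [<-|Hl]; [apply Rmax_l| eapply Rle_trans; [apply H1; auto|apply Rmax_r]].
    + intros u Hu. apply Rmax_lub; auto. apply H; simpl; auto.
Qed.

Definition lin {T K : Type} (a : K -> T -> Z) (vars : list T) (k : K) (y : T -> R) : R :=
  fold_right (fun t acc => IZR (a k t) * y t + acc) 0 vars.
Definition val {T K : Type} (a : K -> T -> Z) (g : K -> R) (vars : list T) (rho : list (nat * K)) (y : T -> R) : R :=
  fold_right (fun ck acc => INR (fst ck) * (lin a vars (snd ck) y + g (snd ck)) + acc) 0 rho.
Definition coef {T K : Type} (a : K -> T -> Z) (rho : list (nat * K)) (t : T) : Z :=
  fold_right (fun ck acc => (Z.of_nat (fst ck) * a (snd ck) t + acc)%Z) 0%Z rho.
Definition scale {K : Type} (c : nat) (rho : list (nat * K)) : list (nat * K) :=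
  map (fun ck => ((c * fst ck)%nat, snd ck)) rho.
Definition combine {T K : Type} (a : K -> T -> Z) (t : T) (p q : list (nat * K)) :=
  scale (Z.to_nat (- coef a q t)) p ++ scale (Z.to_nat (coef a p t)) q.
Definition step {T K : Type} (a : K -> T -> Z) (t : T) (rows : list (list (nat * K))) :=
  filter (fun r => Z.eqb (coef a r t) 0) rows ++
  flat_map (fun p => map (fun q => combine a t p q) (filter (fun r => Z.ltb (coef a r t) 0) rows))
           (filter (fun r => Z.ltb 0 (coef a r t)) rows).
Fixpoint fm {T K : Type} (a : K -> T -> Z) (ts : list T) (rows : list (list (nat * K))) :=
  match ts with [] => rows | t :: ts' => fm a ts' (step a t rows) end.
Definition upd {T : Type} (dec : forall x y : T, {x = y} + {x <> y}) (y : T -> R) (t : T) (s : R) : T -> R :=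
  fun t' => if dec t' t then s else y t'.

Lemma lin_upd_notin {T K : Type} dec (a : K -> T -> Z) vars k y t s : ~ In t vars ->
  lin a vars k (upd dec y t s) = lin a vars k y.
Proof.
  induction vars as [|t' vars IH]; intros Hn; unfold lin in *; simpl; [reflexivity|].
  rewrite IH by (intro; apply Hn; simpl; auto). unfold upd.
  destruct (dec t' t); [subst; exfalso; apply Hn; simpl; auto| reflexivity].
Qed.

Lemma lin_upd {T K : Type} dec (a : K -> T -> Z) vars k y t s : NoDup vars -> In t vars ->
  lin a vars k (upd dec y t s) = lin a vars k y + IZR (a k t) * (s - y t).
Proof.
  induction vars as [|t' vars IH]; intros Hnd Hin; [destruct Hin|].
  inversion Hnd as [|? ? Hn Hnd']; subst.
  unfold lin in *; simpl. unfold upd at 1. destruct (dec t' t) as [->|Hne].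
  - pose proof (lin_upd_notin dec a vars k y t s Hn) as E. unfold lin in E. rewrite E. ring.
  - destruct Hin as [->|Hin]; [congruence|]. rewrite IH by auto. ring.
Qed.

Lemma val_upd {T K : Type} dec (a : K -> T -> Z) g vars rho y t s : NoDup vars -> In t vars ->
  val a g vars rho (upd dec y t s) = val a g vars rho y + IZR (coef a rho t) * (s - y t).
Proof.
  intros Hnd Hin. induction rho as [|[c k] rho IH]; unfold val, coef in *; simpl; [ring|].
  rewrite IH, lin_upd by auto. rewrite plus_IZR, mult_IZR, <- INR_IZR_INZ. ring.
Qed.

Lemma val_app {T K : Type} (a : K -> T -> Z) g vars r1 r2 y :
  val a g vars (r1 ++ r2) y = val a g vars r1 y + val a g vars r2 y.
Proof. induction r1 as [|ck r1 IH]; unfold val in *; simpl; [ring|]. rewrite IH. ring. Qed.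
Lemma coef_app {T K : Type} (a : K -> T -> Z) r1 r2 t :
  coef a (r1 ++ r2) t = (coef a r1 t + coef a r2 t)%Z.
Proof. induction r1 as [|ck r1 IH]; unfold coef in *; simpl; [ring|]. rewrite IH. ring. Qed.
Lemma val_scale {T K : Type} (a : K -> T -> Z) g vars c r y :
  val a g vars (scale c r) y = INR c * val a g vars r y.
Proof. induction r as [|ck r IH]; unfold val, scale in *; simpl; [ring|]. rewrite IH, mult_INR. ring. Qed.
Lemma coef_scale {T K : Type} (a : K -> T -> Z) c r t :
  coef a (scale c r) t = (Z.of_nat c * coef a r t)%Z.
Proof. induction r as [|ck r IH]; unfold coef, scale in *; simpl; [ring|]. rewrite IH, Nat2Z.inj_mul. ring. Qed.

Lemma coef_combine {T K : Type} (a : K -> T -> Z) t p q t' :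
  (0 < coef a p t)%Z -> (coef a q t < 0)%Z ->
  coef a (combine a t p q) t' = (- coef a q t * coef a p t' + coef a p t * coef a q t')%Z.
Proof.
  intros Hp Hq. unfold combine. rewrite coef_app, !coef_scale, !Z2Nat.id by lia. ring.
Qed.

Lemma val_combine {T K : Type} (a : K -> T -> Z) g vars t p q y :
  (0 < coef a p t)%Z -> (coef a q t < 0)%Z ->
  val a g vars (combine a t p q) y = IZR (- coef a q t) * val a g vars p y + IZR (coef a p t) * val a g vars q y.
Proof.
  intros Hp Hq. unfold combine. rewrite val_app, !val_scale, !INR_IZR_INZ, !Z2Nat.id by lia. ring.
Qed.

Lemma step_ok {T K : Type} dec (a : K -> T -> Z) g vars t rows y : NoDup vars -> In t vars ->
  (forall r, In r (step a t rows) -> val a g vars r y >= 0) ->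
  exists s, forall r, In r rows -> val a g vars r (upd dec y t s) >= 0.
Proof.
  intros Hnd Hin H.
  set (pos := filter (fun r => Z.ltb 0 (coef a r t)) rows).
  set (neg := filter (fun r => Z.ltb (coef a r t) 0) rows).
  destruct (between (map (fun p => - val a g vars p y / IZR (coef a p t)) pos)
                    (map (fun q => val a g vars q y / IZR (- coef a q t)) neg)) as [d [Hl Hu]].
  - intros l u Hl Hu. apply in_map_iff in Hl as [p [<- Hp]]. apply in_map_iff in Hu as [q [<- Hq]].
    unfold pos in Hp. unfold neg in Hq. apply filter_In in Hp as [Hp1 Hp2]. apply filter_In in Hq as [Hq1 Hq2].
    apply Z.ltb_lt in Hp2. apply Z.ltb_lt in Hq2.
    assert (Hc : In (combine a t p q) (step a t rows)).
    { unfold step. apply in_or_app. right. apply in_flat_map. exists p. split.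
      - apply filter_In. split; auto. apply Z.ltb_lt; auto.
      - apply in_map. apply filter_In. split; auto. apply Z.ltb_lt; auto. }
    specialize (H _ Hc). rewrite val_combine in H by auto.
    assert (A1 : 0 < IZR (coef a p t)) by (apply IZR_lt; auto).
    assert (A2 : 0 < IZR (- coef a q t)) by (apply IZR_lt; lia).
    set (vp := val a g vars p y) in *. set (vq := val a g vars q y) in *.
    set (cp := IZR (coef a p t)) in *. set (cq := IZR (- coef a q t)) in *.
    apply (Rmult_le_reg_r (cp * cq)); [nra|].
    replace (- vp / cp * (cp * cq)) with (- vp * cq) by (field; lra).
    replace (vq / cq * (cp * cq)) with (vq * cp) by (field; lra). lra.
  - exists (y t + d). intros r Hr. rewrite val_upd by auto.
    replace (y t + d - y t) with d by ring.
    destruct (Z.lt_trichotomy (coef a r t) 0) as [Hneg|[Hz|Hpos]].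
    + assert (In (val a g vars r y / IZR (- coef a r t)) (map (fun q => val a g vars q y / IZR (- coef a q t)) neg)).
      { apply (in_map (fun q => val a g vars q y / IZR (- coef a q t))). apply filter_In. split; auto. apply Z.ltb_lt; auto. }
      specialize (Hu _ H0). assert (A2 : 0 < IZR (- coef a r t)) by (apply IZR_lt; lia).
      rewrite opp_IZR in *. set (v := val a g vars r y) in *. set (c := IZR (coef a r t)) in *.
      apply (Rmult_le_compat_r (- c)) in Hu; [|lra].
      replace (v / - c * - c) with v in Hu by (field; lra). nra.
    + assert (In r (step a t rows)).
      { unfold step. apply in_or_app. left. apply filter_In. split; auto. apply Z.eqb_eq; auto. }
      specialize (H _ H0). rewrite Hz. lra.
    + assert (In (- val a g vars r y / IZR (coef a r t)) (map (fun p => - val a g vars p y / IZR (coef a p t)) pos)).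
      { apply (in_map (fun p => - val a g vars p y / IZR (coef a p t))). apply filter_In. split; auto. apply Z.ltb_lt; auto. }
      specialize (Hl _ H0). assert (A1 : 0 < IZR (coef a r t)) by (apply IZR_lt; lia).
      set (v := val a g vars r y) in *. set (c := IZR (coef a r t)) in *.
      apply (Rmult_le_compat_r c) in Hl; [|lra].
      replace (- v / c * c) with (- v) in Hl by (field; lra). nra.
Qed.

Lemma fm_ok {T K : Type} (dec : forall x y : T, {x = y} + {x <> y}) (a : K -> T -> Z) g vars ts : NoDup vars -> incl ts vars ->
  forall rows y, (forall r, In r (fm a ts rows) -> val a g vars r y >= 0) ->
  exists y', forall r, In r rows -> val a g vars r y' >= 0.
Proof.
  intros Hnd. induction ts as [|t ts IH]; intros Hinc rows y H; simpl in H.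
  - exists y; auto.
  - destruct (IH (fun x Hx => Hinc x (or_intror Hx)) _ _ H) as [y' Hy'].
    destruct (step_ok dec a g vars t rows y' Hnd (Hinc t (or_introl eq_refl)) Hy') as [s Hs].
    eexists; eauto.
Qed.

Lemma step_zero {T K : Type} (a : K -> T -> Z) t t' rows :
  (forall r, In r rows -> coef a r t' = 0%Z) -> forall r, In r (step a t rows) -> coef a r t' = 0%Z.
Proof.
  intros H r Hr. unfold step in Hr. apply in_app_or in Hr as [Hr|Hr].
  - apply filter_In in Hr as [Hr _]; auto.
  - apply in_flat_map in Hr as [p [Hp Hr]]. apply in_map_iff in Hr as [q [<- Hq]].
    apply filter_In in Hp as [Hp1 Hp2]. apply filter_In in Hq as [Hq1 Hq2].
    apply Z.ltb_lt in Hp2. apply Z.ltb_lt in Hq2.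
    rewrite coef_combine by auto. rewrite (H p), (H q) by auto. ring.
Qed.

Lemma step_zero_t {T K : Type} (a : K -> T -> Z) t rows :
  forall r, In r (step a t rows) -> coef a r t = 0%Z.
Proof.
  intros r Hr. unfold step in Hr. apply in_app_or in Hr as [Hr|Hr].
  - apply filter_In in Hr as [_ Hr]. apply Z.eqb_eq; auto.
  - apply in_flat_map in Hr as [p [Hp Hr]]. apply in_map_iff in Hr as [q [<- Hq]].
    apply filter_In in Hp as [Hp1 Hp2]. apply filter_In in Hq as [Hq1 Hq2].
    apply Z.ltb_lt in Hp2. apply Z.ltb_lt in Hq2.
    rewrite coef_combine by auto. ring.
Qed.

Lemma fm_zero {T K : Type} (a : K -> T -> Z) ts : forall rows t, In t ts ->
  forall r, In r (fm a ts rows) -> coef a r t = 0%Z.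
Proof.
  induction ts as [|t0 ts IH]; intros rows t Ht r Hr; [destruct Ht|]. simpl in Hr.
  destruct (classic (In t ts)) as [Hin|Hnin].
  - eapply IH; eauto.
  - destruct Ht as [<-|Ht]; [|contradiction].
    clear IH Hnin. revert Hr. generalize (step_zero_t a t0 rows). generalize (step a t0 rows).
    induction ts as [|t1 ts IH]; simpl; intros rows' Hz Hr; auto.
    eapply IH; [|eauto]. apply step_zero; auto.
Qed.

Lemma lin_zero {T K : Type} (a : K -> T -> Z) vars k : lin a vars k (fun _ => 0) = 0.
Proof. unfold lin. induction vars as [|t vars IH]; simpl; [reflexivity|]. rewrite IH. ring. Qed.

Lemma val_zero {T K : Type} (a : K -> T -> Z) g vars rho :
  val a g vars rho (fun _ => 0) = fold_right (fun ck acc => INR (fst ck) * g (snd ck) + acc) 0 rho.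
Proof.
  induction rho as [|ck rho IH]; unfold val in *; simpl; [reflexivity|]. rewrite IH.
  rewrite lin_zero. ring.
Qed.

Fixpoint forms {Phi0 : Type} (f : lform Phi0) : list (pform Phi0) :=
  match f with
  | LGe t _ => map snd (term_list t)
  | LNot g => forms g
  | LAnd g h => forms g ++ forms h
  end.

Fixpoint absl {Phi0 : Type} (l : list (R * pform Phi0)) (n : nat) : list (R * nat) :=
  match l with [] => [] | p :: l' => (fst p, n) :: absl l' (S n) end.

Fixpoint abs {Phi0 : Type} (f : lform Phi0) (n : nat) : iform :=
  match f with
  | LGe (h, tl) c => IGe (fst h, n) (absl tl (S n)) c
  | LNot g => INot (abs g n)
  | LAnd g h => IAnd (abs g n) (abs h (n + length (forms g)))
  end.

Lemma absl_inst {Phi0 : Type} (sigma : nat -> pform Phi0) d tl : forall n,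
  (forall k, (k < length tl)%nat -> sigma (n + k)%nat = nth k (map snd tl) d) ->
  map (fun p => (fst p, sigma (snd p))) (absl tl n) = tl.
Proof.
  induction tl as [|[a phi] tl IH]; intros n H; simpl; [reflexivity|].
  f_equal.
  - specialize (H 0%nat). rewrite Nat.add_0_r in H. simpl in H. rewrite H by lia. reflexivity.
  - apply IH. intros k Hk. specialize (H (S k)). simpl in H. rewrite <- H by lia. f_equal. lia.
Qed.

Lemma iinst_abs {Phi0 : Type} (sigma : nat -> pform Phi0) d (f : lform Phi0) : forall n,
  (forall k, (k < length (forms f))%nat -> sigma (n + k)%nat = nth k (forms f) d) ->
  iinst sigma (abs f n) = f.
Proof.
  induction f as [[[a phi] tl] c|g IH|g IHg h IHh]; intros n H; simpl.
  - simpl in H. f_equal. f_equal. f_equal.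
    + specialize (H 0%nat). rewrite Nat.add_0_r in H. simpl in H. apply H. lia.
    + apply absl_inst with d. intros k Hk. specialize (H (S k)).
      replace (S n + k)%nat with (n + S k)%nat by lia. apply H. rewrite length_map. simpl. lia.
  - f_equal. apply IH. auto.
  - simpl in H. f_equal.
    + apply IHg. intros k Hk. rewrite H by (rewrite length_app; lia). rewrite app_nth1; auto.
    + apply IHh. intros k Hk. rewrite <- Nat.add_assoc, H by (rewrite length_app; lia).
      rewrite app_nth2 by lia. f_equal. lia.
Qed.

Lemma absl_eval {Phi0 : Type} (M : UPS Phi0) (x : nat -> R) d tl : forall n,
  (forall k, (k < length tl)%nat -> x (n + k)%nat = U M (nth k (map snd tl) d)) ->
  lin_sum x (absl tl n) = tv M tl.
Proof.
  induction tl as [|[a phi] tl IH]; intros n H; unfold tv in *; simpl; [reflexivity|].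
  rewrite (IH (S n)).
  - specialize (H 0%nat). rewrite Nat.add_0_r in H. simpl in H. rewrite H by lia. reflexivity.
  - intros k Hk. specialize (H (S k)). simpl in H. rewrite <- H by lia. f_equal. lia.
Qed.

Lemma lin_sum_cons (x : nat -> R) p l : lin_sum x (p :: l) = fst p * x (snd p) + lin_sum x l.
Proof. reflexivity. Qed.

Lemma ieval_abs {Phi0 : Type} (M : UPS Phi0) (x : nat -> R) d (f : lform Phi0) : forall n,
  (forall k, (k < length (forms f))%nat -> x (n + k)%nat = U M (nth k (forms f) d)) ->
  (ieval x (abs f n) <-> sat M f).
Proof.
  induction f as [[[a phi] tl] c|g IH|g IHg h IHh]; intros n H; cbn [abs ieval sat fst].
  - rewrite tv_cons, lin_sum_cons. simpl in H. simpl fst. simpl snd.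
    rewrite (absl_eval M x d tl (S n)).
    + specialize (H 0%nat). rewrite Nat.add_0_r in H. simpl in H. rewrite H by lia. tauto.
    + intros k Hk. replace (S n + k)%nat with (n + S k)%nat by lia. apply H. rewrite length_map. simpl. lia.
  - rewrite IH; auto. tauto.
  - simpl in H. rewrite IHg, IHh. tauto.
    + intros k Hk. rewrite <- Nat.add_assoc, H by (rewrite length_app; lia).
      rewrite app_nth2 by lia. f_equal. f_equal. lia.
    + intros k Hk. rewrite H by (rewrite length_app; lia). rewrite app_nth1; auto.
Qed.

Fixpoint allvecs (n : nat) : list (list bool) :=
  match n with
  | O => [[]]
  | S n' => map (cons false) (allvecs n') ++ map (cons true) (allvecs n')
  end.

Lemma allvecs_in (n : nat) : forall w, length w = n -> In w (allvecs n).
Proof.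
  induction n as [|n IH]; intros w Hw.
  - destruct w; [simpl; auto| discriminate].
  - destruct w as [|b w]; [discriminate|]. simpl in Hw. simpl. apply in_or_app.
    destruct b; [right|left]; apply in_map; apply IH; lia.
Qed.

Lemma allvecs_nodup (n : nat) : NoDup (allvecs n).
Proof.
  induction n as [|n IH]; simpl.
  - constructor; [intros []| constructor].
  - apply NoDup_app.
    + apply FinFun.Injective_map_NoDup; auto. intros u v E; injection E; auto.
    + apply FinFun.Injective_map_NoDup; auto. intros u v E; injection E; auto.
    + intros w H1 H2. apply in_map_iff in H1 as [u [<- _]]. apply in_map_iff in H2 as [v [E _]]. discriminate.
Qed.

Lemma bit_map {Phi0 : Type} (v : Phi0 -> bool) (fs : list (pform Phi0)) : forall j,
  nth j (map (peval v) fs) false = peval v (nth j fs (PFalse Phi0)).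
Proof.
  induction fs as [|q fs IH]; intros j; destruct j; simpl; auto.
Qed.

Inductive lab : Type := LX (j : nat) | LI | LS1 | LS2 | LP (w : list bool) | LN (w : list bool).

Definition bvec_dec := list_eq_dec Bool.bool_dec.
Definition bit (j : nat) (t : list bool) : bool := nth j t false.
Definition ib (b : bool) : Z := if b then 1%Z else 0%Z.
Definition Realz {Phi0 : Type} (fs : list (pform Phi0)) (w : list bool) : Prop :=
  exists v, map (peval v) fs = w.

Definition acoef {Phi0 : Type} (fs : list (pform Phi0)) (i : nat) (k : lab) (t : list bool) : Z :=
  match k with
  | LX j => (- ib (bit j t))%Z
  | LI => ib (bit i t)
  | LS1 => 1%Z
  | LS2 => (-1)%Z
  | LP w => if bvec_dec t w then 1%Z else 0%Z
  | LN w => if bvec_dec t w then (if bdec (Realz fs w) then 0%Z else (-1)%Z) else 0%Z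
  end.

Definition gpar (x : nat -> R) (i : nat) (k : lab) : R :=
  match k with LX j => x j | LI => - x i | LS1 => -1 | LS2 => 1 | _ => 0 end.

Definition labels (R0 : nat) : list lab :=
  map LX (seq 0 R0) ++ [LI; LS1; LS2] ++ map LP (allvecs R0) ++ map LN (allvecs R0).
Definition rows0 (R0 : nat) : list (list (nat * lab)) := map (fun k => [(1%nat, k)]) (labels R0).
Definition finals {Phi0 : Type} (fs : list (pform Phi0)) (i : nat) :=
  fm (acoef fs i) (allvecs (length fs)) (rows0 (length fs)).

Definition idxs (rho : list (nat * lab)) : list nat :=
  flat_map (fun ck => match snd ck with LX j => repeat j (fst ck) | LS2 => repeat 0%nat (fst ck) | _ => [] end) rho.
Definition nnf (rho : list (nat * lab)) : nat :=
  fold_right (fun ck acc => ((match snd ck with LI => fst ck | _ => 0 end) + acc)%nat) 0%nat rho.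
Definition kkf (rho : list (nat * lab)) : nat :=
  fold_right (fun ck acc => ((match snd ck with LS1 => fst ck | _ => 0 end) + acc)%nat) 0%nat rho.

Definition iL4 (l : list nat) (n i k : nat) : iform :=
  match l with
  | [] => IGe (- INR n, i) [] (INR k)
  | j :: l' => IGe (1, j) (map (fun j => (1, j)) l' ++ [(- INR n, i)]) (INR k)
  end.

Lemma iinst_iL4 {Phi0 : Type} (sigma : nat -> pform Phi0) l n i k :
  iinst sigma (iL4 l n i k) = LGe (L4_term (map sigma l) n (sigma i)) (INR k).
Proof.
  destruct l as [|j l]; simpl; [reflexivity|]. unfold L4_term. simpl. f_equal. f_equal.
  rewrite map_app. simpl. f_equal. rewrite !map_map. reflexivity.
Qed.

Definition sumx (x : nat -> R) (l : list nat) : R := fold_right (fun j acc => x j + acc) 0 l.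

Lemma lin_sum_app x l1 l2 : lin_sum x (l1 ++ l2) = lin_sum x l1 + lin_sum x l2.
Proof. induction l1 as [|p l1 IH]; unfold lin_sum in *; simpl; [ring|]. rewrite IH. ring. Qed.

Lemma ieval_iL4 x l n i k : ieval x (iL4 l n i k) <-> sumx x l - INR n * x i >= INR k.
Proof.
  assert (E : forall l', lin_sum x (map (fun j => (1, j)) l') = sumx x l').
  { induction l' as [|j l' IH]; unfold lin_sum, sumx in *; simpl; [ring|]. rewrite IH. ring. }
  destruct l as [|j l]; simpl.
  - unfold lin_sum, sumx; simpl. replace (- INR n * x i + 0) with (0 - INR n * x i) by ring. tauto.
  - rewrite lin_sum_app, E. unfold lin_sum at 1, sumx at 2. simpl.
    replace (1 * x j + (sumx x l + (- INR n * x i + 0))) with (x j + sumx x l - INR n * x i) by ring.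
    tauto.
Qed.

Lemma cnt_app {Phi0 : Type} (v : Phi0 -> bool) l1 l2 : cnt v (l1 ++ l2) = (cnt v l1 + cnt v l2)%nat.
Proof. induction l1; simpl; lia. Qed.
Lemma cnt_repeat {Phi0 : Type} (v : Phi0 -> bool) q c : cnt v (repeat q c) = if peval v q then c else 0%nat.
Proof. induction c; simpl; destruct (peval v q); simpl in *; lia. Qed.

Lemma ib_bit {Phi0 : Type} (v : Phi0 -> bool) fs j :
  bit j (map (peval v) fs) = peval v (nth j fs (PFalse Phi0)).
Proof. apply bit_map. Qed.

Lemma count_ge {Phi0 : Type} (fs : list (pform Phi0)) i v (rho : list (nat * lab)) :
  nth 0 fs (PFalse Phi0) = PTrue Phi0 ->
  (Z.of_nat (cnt v (map (fun j => nth j fs (PFalse Phi0)) (idxs rho)))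
     + coef (acoef fs i) rho (map (peval v) fs)
   >= Z.of_nat (kkf rho) + ib (bit i (map (peval v) fs)) * Z.of_nat (nnf rho))%Z.
Proof.
  intros H0. set (w := map (peval v) fs).
  assert (Rw : Realz fs w) by (exists v; reflexivity).
  induction rho as [|[c k] rho IH]; [simpl; lia|].
  unfold idxs in *. cbn [flat_map]. rewrite map_app, cnt_app.
  unfold coef in *. cbn [fold_right fst snd]. unfold kkf, nnf in *. cbn [fold_right fst snd].
  destruct k as [j| | | |w'|w']; cbn [acoef]; simpl app; simpl map;
    rewrite ?Nat2Z.inj_add, ?Z.mul_add_distr_l in *;
    set (b := ib (bit i w)) in *;
    assert (0 <= b)%Z by (unfold b, ib; destruct (bit i w); lia).
  - rewrite map_repeat, cnt_repeat.
    replace (bit j w) with (peval v (nth j fs (PFalse Phi0))) by (symmetry; apply ib_bit).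
    destruct (peval v (nth j fs (PFalse Phi0))); simpl; lia.
  - rewrite (Z.mul_comm b (Z.of_nat c)). simpl cnt. lia.
  - lia.
  - rewrite map_repeat, cnt_repeat, H0. simpl. lia.
  - destruct (bvec_dec w w'); lia.
  - destruct (bvec_dec w w') as [<-|]; [|lia].
    destruct (bdec (Realz fs w)) eqn:Eb; [lia|].
    exfalso. assert (bdec (Realz fs w) = true) by (apply bdec_true; auto). congruence.
Qed.

Lemma sumx_app x l1 l2 : sumx x (l1 ++ l2) = sumx x l1 + sumx x l2.
Proof. induction l1; unfold sumx in *; simpl; [ring|]. rewrite IHl1. ring. Qed.
Lemma sumx_repeat x j c : sumx x (repeat j c) = INR c * x j.
Proof. induction c; unfold sumx in *; simpl; [ring|]. rewrite IHc. destruct c; simpl; ring. Qed.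

Lemma sumx_nil x : sumx x [] = 0.
Proof. reflexivity. Qed.

Lemma gval x i rho : x 0%nat = 1 ->
  fold_right (fun ck acc => INR (fst ck) * gpar x i (snd ck) + acc) 0 rho
  = sumx x (idxs rho) - INR (nnf rho) * x i - INR (kkf rho).
Proof.
  intros H0. induction rho as [|[c k] rho IH]; [unfold sumx; simpl; ring|].
  unfold idxs, nnf, kkf in *. cbn [flat_map fold_right fst snd]. rewrite sumx_app, IH.
  destruct k; cbn [gpar]; simpl app; rewrite ?sumx_repeat, ?sumx_nil, ?plus_INR; simpl INR; rewrite ?H0; ring.
Qed.

Definition bitsum (vars : list (list bool)) (j : nat) (m : list bool -> R) : R :=
  fold_right (fun t acc => IZR (ib (bit j t)) * m t + acc) 0 vars.
Definition sumV (vars : list (list bool)) (m : list bool -> R) : R :=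
  fold_right (fun t acc => m t + acc) 0 vars.

Lemma lin_LX {Phi0 : Type} (fs : list (pform Phi0)) i vars j m :
  lin (acoef fs i) vars (LX j) m = - bitsum vars j m.
Proof. induction vars; unfold lin, bitsum in *; simpl in *; [ring|]. first [reflexivity | rewrite IHvars, opp_IZR; ring]. Qed.
Lemma lin_LI {Phi0 : Type} (fs : list (pform Phi0)) i vars m :
  lin (acoef fs i) vars LI m = bitsum vars i m.
Proof. induction vars; unfold lin, bitsum in *; simpl in *; [ring|]. first [reflexivity | rewrite IHvars; ring]. Qed.
Lemma lin_LS1 {Phi0 : Type} (fs : list (pform Phi0)) i vars m :
  lin (acoef fs i) vars LS1 m = sumV vars m.
Proof. induction vars; unfold lin, sumV in *; simpl in *; [ring|]. first [reflexivity | rewrite IHvars; ring]. Qed.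
Lemma lin_LS2 {Phi0 : Type} (fs : list (pform Phi0)) i vars m :
  lin (acoef fs i) vars LS2 m = - sumV vars m.
Proof. induction vars; unfold lin, sumV in *; simpl in *; [ring|]. first [reflexivity | rewrite IHvars; ring]. Qed.

Lemma point_notin (vars : list (list bool)) w c m : ~ In w vars ->
  fold_right (fun t acc => IZR (if bvec_dec t w then c else 0%Z) * m t + acc) 0 vars = 0.
Proof.
  induction vars as [|t vars IH]; intros Hn; simpl; [ring|].
  rewrite IH by (intro; apply Hn; simpl; auto). destruct (bvec_dec t w); [subst; exfalso; apply Hn; simpl; auto| ring].
Qed.

Lemma point_in (vars : list (list bool)) w c m : NoDup vars -> In w vars ->
  fold_right (fun t acc => IZR (if bvec_dec t w then c else 0%Z) * m t + acc) 0 vars = IZR c * m w.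
Proof.
  induction vars as [|t vars IH]; intros Hnd Hin; [destruct Hin|]. inversion Hnd; subst. simpl.
  destruct (bvec_dec t w) as [->|Hne].
  - rewrite point_notin by auto. ring.
  - rewrite IH; [ring|auto|]. destruct Hin; [congruence|auto].
Qed.

Lemma lin_LP {Phi0 : Type} (fs : list (pform Phi0)) i vars w m : NoDup vars -> In w vars ->
  lin (acoef fs i) vars (LP w) m = m w.
Proof. intros. unfold lin. cbn [acoef]. rewrite point_in by auto. ring. Qed.
Lemma lin_LN {Phi0 : Type} (fs : list (pform Phi0)) i vars w m : NoDup vars -> In w vars ->
  lin (acoef fs i) vars (LN w) m = IZR (if bdec (Realz fs w) then 0%Z else (-1)%Z) * m w.
Proof. intros. unfold lin. cbn [acoef]. rewrite point_in by auto. ring. Qed.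

Definition cv {Phi0 : Type} (fs : list (pform Phi0)) (t : list bool) : Phi0 -> bool :=
  match excluded_middle_informative (Realz fs t) with
  | left H => proj1_sig (constructive_indefinite_description _ H)
  | right _ => fun _ => true
  end.

Lemma cv_spec {Phi0 : Type} (fs : list (pform Phi0)) t : Realz fs t -> map (peval (cv fs t)) fs = t.
Proof.
  intros H. unfold cv. destruct (excluded_middle_informative (Realz fs t)) as [H'|]; [|contradiction].
  exact (proj2_sig (constructive_indefinite_description _ H')).
Qed.

Definition indR {Phi0 : Type} (fs : list (pform Phi0)) (t : list bool) (X : (Phi0 -> bool) -> Prop) : R :=
  if excluded_middle_informative (Realz fs t /\ X (cv fs t)) then 1 else 0.

Definition muOf {Phi0 : Type} (fs : list (pform Phi0)) (m : list bool -> R) (X : (Phi0 -> bool) -> Prop) : R :=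
  fold_right (fun t acc => m t * indR fs t X + acc) 0 (allvecs (length fs)).

Definition Good {Phi0 : Type} (fs : list (pform Phi0)) (x : nat -> R) (m : list bool -> R) : Prop :=
  let vars := allvecs (length fs) in
  (forall t, In t vars -> 0 <= m t) /\ (forall t, In t vars -> ~ Realz fs t -> m t = 0) /\
  sumV vars m = 1 /\ (forall j, (j < length fs)%nat -> bitsum vars j m <= x j).

Lemma fold_ext_in (vars : list (list bool)) (F G : list bool -> R) :
  (forall t, In t vars -> F t = G t) ->
  fold_right (fun t acc => F t + acc) 0 vars = fold_right (fun t acc => G t + acc) 0 vars.
Proof.
  induction vars as [|t vars IH]; intros H; simpl; [reflexivity|].
  rewrite H, IH; auto; [intros; apply H; simpl; auto| simpl; auto].
Qed.

Lemma fold_ge0 (vars : list (list bool)) (F : list bool -> R) :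
  (forall t, In t vars -> 0 <= F t) -> 0 <= fold_right (fun t acc => F t + acc) 0 vars.
Proof.
  induction vars as [|t vars IH]; intros H; simpl; [lra|].
  pose proof (H t (or_introl eq_refl)). pose proof (IH (fun t' Ht => H t' (or_intror Ht))). lra.
Qed.

Lemma fold_add (vars : list (list bool)) (F G : list bool -> R) :
  fold_right (fun t acc => (F t + G t) + acc) 0 vars =
  fold_right (fun t acc => F t + acc) 0 vars + fold_right (fun t acc => G t + acc) 0 vars.
Proof. induction vars as [|t vars IH]; simpl; [ring|]. rewrite IH. ring. Qed.

Lemma muOf_prob {Phi0 : Type} (fs : list (pform Phi0)) x m : Good fs x m ->
  is_fa_prob (fun _ => True) (muOf fs m).
Proof.
  intros [Hpos [Hreal [Hsum _]]]. unfold muOf. split; [|split].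
  - intros X _. apply fold_ge0. intros t Ht. unfold indR.
    destruct (excluded_middle_informative _); pose proof (Hpos t Ht); lra.
  - rewrite <- Hsum. unfold sumV. apply fold_ext_in. intros t Ht. unfold indR.
    destruct (excluded_middle_informative _) as [_|Hn]; [ring|].
    rewrite Hreal; [ring|auto|intro Hr; apply Hn; auto].
  - intros X Y _ _ Hd. rewrite <- fold_add. apply fold_ext_in. intros t Ht. unfold indR.
    destruct (excluded_middle_informative (Realz fs t /\ (X (cv fs t) \/ Y (cv fs t)))) as [[H1 H2]|H1];
    destruct (excluded_middle_informative (Realz fs t /\ X (cv fs t))) as [H3|H3];
    destruct (excluded_middle_informative (Realz fs t /\ Y (cv fs t))) as [H4|H4]; try ring;
    exfalso; first [apply (Hd (cv fs t)); tauto | tauto].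
Qed.

Lemma muOf_ext {Phi0 : Type} (fs : list (pform Phi0)) x m j : Good fs x m ->
  muOf fs m (fun s => peval s (nth j fs (PFalse Phi0)) = true) = bitsum (allvecs (length fs)) j m.
Proof.
  intros [Hpos [Hreal [Hsum _]]]. unfold muOf, bitsum.
  apply fold_ext_in. intros t Ht. unfold indR.
  destruct (classic (Realz fs t)) as [Hr|Hn].
  - assert (E : peval (cv fs t) (nth j fs (PFalse Phi0)) = bit j t).
    { rewrite <- ib_bit, cv_spec; auto. }
    rewrite E. destruct (excluded_middle_informative (Realz fs t /\ bit j t = true)) as [[_ Hb]|Hb].
    + rewrite Hb. simpl. ring.
    + destruct (bit j t) eqn:Eb; [exfalso; tauto|]. simpl. ring.
  - rewrite Hreal; auto. ring.
Qed.

Definition Pset {Phi0 : Type} (fs : list (pform Phi0)) (x : nat -> R) (mu : ((Phi0 -> bool) -> Prop) -> R) : Prop :=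
  exists m, Good fs x m /\ mu = muOf fs m.

Lemma alg_triv {T : Type} : is_algebra (fun _ : T -> Prop => True).
Proof. split; [exact I| split; intros; exact I]. Qed.

Lemma Pset_prob {Phi0 : Type} (fs : list (pform Phi0)) x :
  forall mu, Pset fs x mu -> is_fa_prob (fun _ => True) mu.
Proof. intros mu [m [G ->]]. eapply muOf_prob; eauto. Qed.

Lemma Pset_ne {Phi0 : Type} (fs : list (pform Phi0)) x : (exists m, Good fs x m) -> exists mu, Pset fs x mu.
Proof. intros [m G]. exists (muOf fs m). exists m; auto. Qed.

Definition mkUPS {Phi0 : Type} (fs : list (pform Phi0)) (x : nat -> R) (Hne : exists m, Good fs x m) : UPS Phi0 :=
  @Build_UPS Phi0 (Phi0 -> bool) (fun _ => True) alg_triv (Pset fs x) (Pset_prob fs x) (Pset_ne fs x Hne)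
    (fun s => s) (fun _ => I).

Lemma U_mk {Phi0 : Type} (fs : list (pform Phi0)) x Hne j : (j < length fs)%nat ->
  (exists m, Good fs x m /\ x j <= bitsum (allvecs (length fs)) j m) ->
  U (mkUPS fs x Hne) (nth j fs (PFalse Phi0)) = x j.
Proof.
  intros Hj [mj [Gj Hmj]].
  destruct (upper_props (mkUPS fs x Hne) _ (ext_Sigma (mkUPS fs x Hne) (nth j fs (PFalse Phi0)))) as [H1 H2].
  unfold U. apply Rle_antisym.
  - apply H2. intros mu [m [G ->]]. unfold ext. simpl. rewrite (muOf_ext fs x m j G).
    destruct G as [_ [_ [_ G]]]. apply G; auto.
  - eapply Rle_trans; [|apply (H1 (muOf fs mj)); exists mj; auto].
    unfold ext. simpl. rewrite (muOf_ext fs x mj j Gj). auto.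
Qed.

Lemma in_labels_LX R0 j : (j < R0)%nat -> In (LX j) (labels R0).
Proof. intros. unfold labels. apply in_or_app. left. apply in_map. apply in_seq. lia. Qed.
Lemma in_labels_mid R0 k : In k [LI; LS1; LS2] -> In k (labels R0).
Proof. intros. unfold labels. apply in_or_app. right. apply in_or_app. left. auto. Qed.
Lemma in_labels_LP R0 w : In w (allvecs R0) -> In (LP w) (labels R0).
Proof. intros. unfold labels. apply in_or_app. right. apply in_or_app. right. apply in_or_app. left. apply in_map; auto. Qed.
Lemma in_labels_LN R0 w : In w (allvecs R0) -> In (LN w) (labels R0).
Proof. intros. unfold labels. apply in_or_app. right. apply in_or_app. right. apply in_or_app. right. apply in_map; auto. Qed.

Lemma fm_good {Phi0 : Type} (fs : list (pform Phi0)) x i : (i < length fs)%nat -> x 0%nat = 1 ->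
  (forall rho, In rho (finals fs i) -> ieval x (iL4 (idxs rho) (nnf rho) i (kkf rho))) ->
  exists m, Good fs x m /\ x i <= bitsum (allvecs (length fs)) i m.
Proof.
  intros Hi H0 H.
  set (vars := allvecs (length fs)).
  assert (Hnd : NoDup vars) by apply allvecs_nodup.
  destruct (fm_ok bvec_dec (acoef fs i) (gpar x i) vars vars Hnd (incl_refl _) (rows0 (length fs)) (fun _ => 0))
    as [m Hm].
  { intros rho Hr. rewrite val_zero, gval by auto. specialize (H rho Hr). apply ieval_iL4 in H. lra. }
  assert (K : forall k, In k (labels (length fs)) -> lin (acoef fs i) vars k m + gpar x i k >= 0).
  { intros k Hk. assert (Hr : In [(1%nat, k)] (rows0 (length fs))).
    { unfold rows0. apply (in_map (fun k => [(1%nat, k)])). auto. }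
    specialize (Hm _ Hr). unfold val in Hm. simpl in Hm. lra. }
  subst vars. exists m. split; [split; [|split; [|split]]|].
  - intros t Ht. specialize (K (LP t) (in_labels_LP _ _ Ht)). rewrite lin_LP in K by auto. simpl in K. lra.
  - intros t Ht Hn. pose proof (K (LP t) (in_labels_LP _ _ Ht)) as K1. rewrite lin_LP in K1 by auto.
    specialize (K (LN t) (in_labels_LN _ _ Ht)). rewrite lin_LN in K by auto.
    destruct (bdec (Realz fs t)) eqn:Eb.
    + exfalso; apply Hn; apply bdec_true; exact Eb.
    + simpl in K, K1. lra.
  - pose proof (K LS1 (in_labels_mid _ LS1 ltac:(simpl; auto))) as K1.
    pose proof (K LS2 (in_labels_mid _ LS2 ltac:(simpl; auto))) as K2.
    rewrite lin_LS1 in K1. rewrite lin_LS2 in K2. simpl in K1, K2. lra.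
  - intros j Hj. specialize (K (LX j) (in_labels_LX _ _ Hj)). rewrite lin_LX in K. simpl in K. lra.
  - specialize (K LI (in_labels_mid _ LI ltac:(simpl; auto))). rewrite lin_LI in K. simpl in K. lra.
Qed.

Lemma prov_and {Phi0 : Type} (a b : lform Phi0) : provable a -> provable b -> provable (LAnd a b).
Proof.
  intros Ha Hb.
  pose (s := SNot (SAnd (SVar 0) (SNot (SNot (SAnd (SVar 1) (SNot (SAnd (SVar 0) (SVar 1))))))) ).
  assert (Hs : staut s) by (intros v; simpl; destruct (v 0%nat), (v 1%nat); reflexivity).
  pose proof (@Ax_Taut _ s (fun n => match n with O => a | _ => b end) Hs) as HT.
  change (provable (LImp a (LImp b (LAnd a b)))) in HT.
  apply (@Rule_MP _ b); auto. apply (@Rule_MP _ a); auto.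
Qed.

Lemma prov_fold {Phi0 : Type} (sigma : nat -> pform Phi0) base l :
  provable (iinst sigma base) -> (forall e, In e l -> provable (iinst sigma e)) ->
  provable (iinst sigma (fold_right IAnd base l)).
Proof.
  induction l as [|e l IH]; intros Hb Hl; simpl; auto.
  apply prov_and; auto. apply Hl; simpl; auto. apply IH; auto. intros; apply Hl; simpl; auto.
Qed.

Lemma ieval_fold x base l : ieval x (fold_right IAnd base l) -> ieval x base /\ forall e, In e l -> ieval x e.
Proof.
  induction l as [|e l IH]; simpl; intros H.
  - split; auto. intros _ [].
  - destruct H as [H1 H2]. destruct (IH H2) as [H3 H4]. split; auto. intros e' [<-|He]; auto.
Qed.

Theorem theorem4 (Phi0 : Type) (f : lform Phi0) :
  provable f <-> (forall M : UPS Phi0, sat M f).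
Proof.
  split; [intros Hp M; apply soundness; auto|intros Hv].
  set (fs := PTrue Phi0 :: forms f).
  set (sigma := fun j => nth j fs (PFalse Phi0)).
  set (R0 := length fs).
  set (hyps := flat_map (fun i => map (fun rho => iL4 (idxs rho) (nnf rho) i (kkf rho)) (finals fs i)) (seq 0 R0)).
  set (L2abs := IAnd (IGe (1, 0%nat) [] 1) (IGe (Ropp 1, 0%nat) [] (Ropp 1))).
  set (E := INot (IAnd (fold_right IAnd L2abs hyps) (INot (abs f 1)))).
  assert (Hhyp : forall e, In e hyps -> exists i rho, (i < R0)%nat /\ In rho (finals fs i) /\
                   e = iL4 (idxs rho) (nnf rho) i (kkf rho)).
  { intros e He. unfold hyps in He. apply in_flat_map in He as [i [Hi He]].
    apply in_map_iff in He as [rho [<- Hr]]. apply in_seq in Hi. exists i, rho. repeat split; auto; lia. }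
  assert (Hhyp' : forall i rho, (i < R0)%nat -> In rho (finals fs i) -> In (iL4 (idxs rho) (nnf rho) i (kkf rho)) hyps).
  { intros i rho Hi Hr. unfold hyps. apply in_flat_map. exists i. split; [apply in_seq; lia|].
    apply (in_map (fun rho => iL4 (idxs rho) (nnf rho) i (kkf rho))). auto. }
  assert (HE : ivalid E).
  { intros x. unfold E. simpl. intros [HA HB]. apply HB.
    apply ieval_fold in HA as [HL2 Hall].
    assert (H0 : x 0%nat = 1) by (unfold L2abs in HL2; simpl in HL2; unfold lin_sum in HL2; simpl in HL2; lra).
    assert (Hm : forall i, (i < R0)%nat -> exists m, Good fs x m /\ x i <= bitsum (allvecs (length fs)) i m).
    { intros i Hi. apply fm_good; auto. all: intros rho Hr; apply Hall; apply Hhyp'; auto. }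
    assert (Hne : exists m, Good fs x m).
    { destruct (Hm 0%nat) as [m [G _]]; [unfold R0, fs; simpl; lia| exists m; auto]. }
    apply (ieval_abs (mkUPS fs x Hne) x (PFalse Phi0) f 1); [|apply Hv].
    intros k Hk. symmetry. change (nth k (forms f) (PFalse Phi0)) with (nth (S k) fs (PFalse Phi0)).
    apply U_mk; [unfold fs; simpl; lia|]. apply Hm. unfold R0, fs; simpl; lia. }
  pose proof (@Ax_Ineq _ E sigma HE) as HI.
  change (provable (LImp (iinst sigma (fold_right IAnd L2abs hyps)) (iinst sigma (abs f 1)))) in HI.
  rewrite (iinst_abs sigma (PFalse Phi0) f 1) in HI by (intros k Hk; reflexivity).
  refine (@Rule_MP _ _ _ (prov_fold sigma L2abs hyps (Ax_L2 Phi0) _) HI).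
  intros e He. destruct (Hhyp e He) as [i [rho [Hi [Hr ->]]]].
  rewrite iinst_iL4.
  assert (Hz : forall v, coef (acoef fs i) rho (map (peval v) fs) = 0%Z).
  { intros v. apply (fm_zero (acoef fs i) (allvecs (length fs)) (rows0 (length fs))); auto.
    apply allvecs_in. apply length_map. }
  assert (Hc : forall v, (Z.of_nat (cnt v (map sigma (idxs rho))) >= Z.of_nat (kkf rho) + ib (peval v (sigma i)) * Z.of_nat (nnf rho))%Z).
  { intros v. pose proof (count_ge fs i v rho eq_refl) as C. rewrite Hz, ib_bit in C. unfold sigma. lia. }
  apply Ax_L4 with (m := length (map sigma (idxs rho))); auto.
  - intros v. simpl. specialize (Hc v). destruct (peval v (sigma i)) eqn:Ei; simpl; [|reflexivity].
    destruct (peval v (at_least (kkf rho + nnf rho) (map sigma (idxs rho)))) eqn:Ea; [reflexivity|].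
    exfalso. assert (peval v (at_least (kkf rho + nnf rho) (map sigma (idxs rho))) = true); [|congruence].
    apply at_least_spec. unfold ib in Hc. lia.
  - intros v. apply at_least_spec. specialize (Hc v).
    destruct (peval v (sigma i)); unfold ib in Hc; lia.
Qed.
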